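(* If $Q$ is a saturated cover on a finite modular lattice $M$, then $\langle Q\rangle$ is a saturated transfer system on $M$.
   Context: A lattice $M$ is modular if $a\le b$ implies $a\vee(x\wedge b)=(a\vee x)\wedge b$. A transfer system on a finite lattice $(P,\le)$ is a partial order $R$ refining $\le$ closed under restriction: $x\,R\,z$ and $y\le z$ imply $(x\wedge y)\,R\,y$; it is saturated if $x\,R\,y$, $y\le z$ and $x\,R\,z$ imply $y\,R\,z$. For a set $Q$ of pairs $(x,y)$ with $x\le y$, $\langle Q\rangle$ is the intersection of all transfer systems containing $Q$. A covering diamond is a quadruple $x,y,x\wedge y,x\vee y$ with $x\ne y$ such that $x\vee y$ covers $x$ and $y$ and both cover $x\wedge y$. A saturated cover on $M$ is a set $Q$ of covering relations of $M$ such that (1) for all $x,y$, if $x\,Q\,(x\vee y)$ then $(x\wedge y)\,Q\,y$; (2) for every covering diamond, if three of its four covering relations lie in $Q$, so does the fourth. *)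

(* Defs.v *)
From HB Require Import structures.
From mathcomp Require Import all_boot all_order.
Set Implicit Arguments. Unset Strict Implicit. Unset Printing Implicit Defensive.
Import Order.Theory.
Local Open Scope order_scope.

Definition prel (T : Type) := T -> T -> Prop.

Section Transfer.
Context {d : Order.disp_t} {M : latticeType d}.

Definition modular_lattice : Prop :=
  forall a b x : M, a <= b -> a `|` (x `&` b) = (a `|` x) `&` b.

Definition covers (x y : M) : Prop :=
  x < y /\ ~ (exists z : M, x < z /\ z < y).

Definition transfer_system (R : prel M) : Prop :=
  [/\ (forall x, R x x),
      (forall x y, R x y -> R y x -> x = y),
      (forall x y z, R x y -> R y z -> R x z),
      (forall x y, R x y -> x <= y) &
      (forall x y z, R x z -> y <= z -> R (x `&` y) y)].

Definition saturated (R : prel M) : Prop :=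
  forall x y z, R x y -> y <= z -> R x z -> R y z.

Definition generated (Q : prel M) : prel M :=
  fun x y => forall R : prel M, transfer_system R ->
    (forall a b, Q a b -> R a b) -> R x y.

Definition covering_diamond (x y : M) : Prop :=
  [/\ x <> y, covers x (x `|` y), covers y (x `|` y),
      covers (x `&` y) x & covers (x `&` y) y].

Definition saturated_cover (Q : prel M) : Prop :=
  [/\ (forall a b, Q a b -> covers a b),
      (forall x y, Q x (x `|` y) -> Q (x `&` y) y) &
      (forall x y, covering_diamond x y ->
         let r1 := Q (x `&` y) x in let r2 := Q (x `&` y) y in
         let r3 := Q x (x `|` y) in let r4 := Q y (x `|` y) in
         [/\ r1 -> r2 -> r3 -> r4, r1 -> r2 -> r4 -> r3,
             r1 -> r3 -> r4 -> r2 & r2 -> r3 -> r4 -> r1])].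
End Transfer.

(* Main.v *)
Require Import Defs.
From mathcomp Require Import all_boot all_order.
Import Order.Theory.
Set Implicit Arguments. Unset Strict Implicit.

Section Proof.
Local Open Scope order_scope.
Context {d : Order.disp_t} {M : latticeType d} (Q : M -> M -> Prop).
Hypothesis Qcov : forall {a b}, Q a b -> covers a b.

Inductive rt : M -> M -> Prop :=
| rt_refl x : rt x x
| rt_step x y z : Q x y -> rt y z -> rt x z.

Lemma cov_lt (x y : M) : covers x y -> x < y.
Proof. by case. Qed.

Lemma cov_eq (x y t : M) : covers x y -> x <= t -> t <= y -> t = x \/ t = y.
Proof.
case=> _ H xt ty; case: (eqVneq t x) => [->|nx]; first by left.
case: (eqVneq t y) => [->|ny]; first by right.
exfalso; apply: H; exists t; by rewrite !lt_neqAle (eq_sym x) nx ny xt ty.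
Qed.

Lemma rt_trans (x y z : M) : rt x y -> rt y z -> rt x z.
Proof.
elim=> [//|a b c Hab _ IH] Hcz; exact: rt_step Hab (IH Hcz).
Qed.

Lemma rt_le (x y : M) : rt x y -> x <= y.
Proof.
elim=> [//|a b c Hab _ IH]; apply: (le_trans _ IH); exact: (ltW (cov_lt (Qcov Hab))).
Qed.

Lemma rt_one (x y : M) : Q x y -> rt x y.
Proof. move=> H; apply: rt_step H (rt_refl _). Qed.

Hypothesis Qdown : forall {x y}, Q x (x `|` y) -> Q (x `&` y) y.

Lemma rt_restr (x z y : M) : rt x z -> y <= z -> rt (x `&` y) y.
Proof.
move=> H; elim: H y => [a y ay|a b c Hab Hbc IH y yc].
  by rewrite meet_r //; constructor.
apply: rt_trans (IH _ yc).
set w := b `&` y.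
have cv := Qcov Hab.
have ab := ltW (cov_lt cv).
have Hle : a `&` y <= w by rewrite lexI leIr andbT; exact: le_trans (leIl _ _) ab.
case Hwa: (w <= a).
  have -> : a `&` y = w.
    apply: le_anti; rewrite Hle /=.
    by rewrite lexI Hwa /w leIr.
  constructor.
have S : a `|` w <= b by rewrite leUx ab /w leIl.
have [E|E] := cov_eq cv (leUl a w) S.
- by move: (leUr w a); rewrite E Hwa.
- have -> : a `&` y = a `&` w.
    by rewrite /w meetA (meet_l ab).
  apply: rt_one; apply: Qdown; by rewrite E.
Qed.

Lemma rt_cover (x y : M) : rt x y -> covers x y -> Q x y.
Proof.
case=> [a [] |a u b Hau Hub cv]; first by rewrite ltxx.
have [E|E] := cov_eq cv (ltW (cov_lt (Qcov Hau))) (rt_le Hub).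
- by move: (cov_lt (Qcov Hau)); rewrite E ltxx.
- by rewrite -E.
Qed.

Hypothesis Hmod : modular_lattice (M := M).
Hypothesis Qdia : forall {x y}, covering_diamond x y ->
         let r1 := Q (x `&` y) x in let r2 := Q (x `&` y) y in
         let r3 := Q x (x `|` y) in let r4 := Q y (x `|` y) in
         [/\ r1 -> r2 -> r3 -> r4, r1 -> r2 -> r4 -> r3,
             r1 -> r3 -> r4 -> r2 & r2 -> r3 -> r4 -> r1].

Lemma two_covers (x a b : M) : covers x a -> covers x b -> a <> b ->
  a `&` b = x /\ covers a (a `|` b).
Proof.
move=> ca cb nab.
have xa := ltW (cov_lt ca); have xb := ltW (cov_lt cb).
have mx : a `&` b = x.
  have S : x <= a `&` b by rewrite lexI xa xb.
  have [E|E] := cov_eq ca S (leIl a b).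
  - exact: E.
  - have ab : a <= b by rewrite -E leIr.
    have [E2|E2] := cov_eq cb xa ab.
    + by move: (cov_lt ca); rewrite E2 ltxx.
    + by [].
split=> //; split.
  rewrite lt_neqAle leUl andbT; apply/negP => /eqP E.
  have ba : b <= a by rewrite E (leUr b a).
  have [E2|E2] := cov_eq ca xb ba.
  - by move: (cov_lt cb); rewrite E2 ltxx.
  - by apply: nab.
case=> t [a_t tj].
have Hm := Hmod b (ltW a_t).
have S : x <= b `&` t by rewrite lexI (le_trans xa (ltW a_t)) xb.
have [E|E] := cov_eq cb S (leIl b t).
- move: Hm; rewrite E (join_l xa).
  rewrite (meet_r (ltW tj)) => E2.
  by move: a_t; rewrite -E2 ltxx.
- have bt : b <= t by rewrite -E leIr.
  have : a `|` b <= t by rewrite leUx (ltW a_t) bt.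
  by move=> h; move: (lt_le_trans tj h); rewrite ltxx.
Qed.

Lemma keyL (x z : M) : rt x z -> forall a, Q x a -> a <= z -> rt a z.
Proof.
elim=> [y a Hya ay|y z1 z0 Hyz1 Hz1z IH a Hya az].
  by move: (le_lt_trans ay (cov_lt (Qcov Hya))); rewrite ltxx.
case: (eqVneq a z1) => [->//|naz].
have [mx cva] := two_covers (Qcov Hya) (Qcov Hyz1) (elimN eqP naz).
have [mx' cvb] := two_covers (Qcov Hyz1) (Qcov Hya) (fun e => elimN eqP naz (esym e)).
set w := a `|` z1.
have wz : w <= z0 by rewrite leUx az (rt_le Hz1z).
have Qz1w : Q z1 w.
  apply: rt_cover; last by rewrite /w joinC.
  by move: (rt_restr Hz1z wz); rewrite /w meet_l ?(leUr z1 a).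
have Hwz := IH w Qz1w wz.
have dia : covering_diamond a z1.
  split=> //; first exact: (elimN eqP naz).
  - by rewrite joinC.
  - by rewrite mx; exact: Qcov Hya.
  - by rewrite mx; exact: Qcov Hyz1.
have [_ h _ _] := Qdia dia.
have h2 : Q (a `&` z1) a -> Q (a `&` z1) z1 -> Q z1 (a `|` z1) -> Q a (a `|` z1) := h.
rewrite mx in h2. apply: rt_step Hwz; exact: h2 Hya Hyz1 Qz1w.
Qed.

Lemma rt_sat (x y z : M) : rt x y -> y <= z -> rt x z -> rt y z.
Proof.
move=> H; elim: H z => [//|a b c Hab Hbc IH z1 cz Haz].
have bz : b <= z1 by exact: le_trans (rt_le Hbc) cz.
exact: (IH z1 cz (keyL Haz Hab bz)).
Qed.

Lemma rt_ts : transfer_system rt.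
Proof.
split.
- exact: rt_refl.
- by move=> x y H1 H2; apply: le_anti; rewrite (rt_le H1) (rt_le H2).
- exact: rt_trans.
- exact: rt_le.
- by move=> x y z; exact: rt_restr.
Qed.

Lemma gen_rt (x y : M) : generated Q x y <-> rt x y.
Proof.
split.
  move=> H; apply: H; first exact: rt_ts.
  exact: rt_one.
move=> H R [Rr _ Rt _ _] HQ; elim: H => [//|a b c Hab _ IH].
exact: Rt (HQ _ _ Hab) IH.
Qed.

End Proof.

Theorem proposition3p11 (d : Order.disp_t) (M : finLatticeType d)
  (Q : M -> M -> Prop) :
  modular_lattice (M := M) -> saturated_cover Q ->
  transfer_system (generated Q) /\ saturated (generated Q).
Proof.
move=> Hmod [Qc Qd Qdia].
have [Hr Ha Ht Hl Hs] := rt_ts Qc Qd.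
split.
  split.
  - by move=> x; apply/gen_rt.
  - by move=> x y /(gen_rt Qc Qd) H1 /(gen_rt Qc Qd) H2; exact: Ha.
  - by move=> x y z /(gen_rt Qc Qd) H1 /(gen_rt Qc Qd) H2; apply/(gen_rt Qc Qd); exact: Ht H2.
  - by move=> x y /(gen_rt Qc Qd) H1; exact: Hl.
  - by move=> x y z /(gen_rt Qc Qd) H1 yz; apply/(gen_rt Qc Qd); exact: Hs yz.
move=> x y z /(gen_rt Qc Qd) H1 yz /(gen_rt Qc Qd) H2; apply/(gen_rt Qc Qd).
exact: rt_sat Qc Qd Hmod Qdia _ _ _ H1 yz H2.
Qed.
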